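(* Let $d_0 \geq 2$ and $n\ge 6$, and let $\mathcal{H}$ be a $[3]$-graph on $n$ vertices such that every pair $u,v$ of non-adjacent vertices satisfies $d_{\partial \mathcal{H}}(u) + d_{\partial \mathcal{H}}(v) \geq n + d_0$. Suppose $\mathcal{H}$ contains a Hamiltonian Berge path but no Hamiltonian Berge cycle. Then $\mathcal{H}$ contains a Berge cycle of length $n-1$ or $n-2$.
   Context: A $[3]$-graph is a hypergraph in which every edge has at most $3$ vertices. Two distinct vertices are adjacent if some edge contains both; $d_{\partial\mathcal{H}}(u)$ is the number of vertices adjacent to $u$. A Berge path of length $t$ is a sequence of $t$ distinct edges $e_1,\dots,e_t$ and $t+1$ distinct vertices $v_1,\dots,v_{t+1}$ with $\{v_i,v_{i+1}\}\subseteq e_i$ for all $i$; it is Hamiltonian if $\{v_1,\dots,v_{t+1}\}=V(\mathcal{H})$. A Berge cycle of length $t$ is a collection of $t$ distinct edges $e_1,\dots,e_t$ and $t$ distinct vertices $v_1,\dots,v_t$ with $\{v_i,v_{i+1}\}\subseteq e_i$ for all $i\in[t]$, where $v_{t+1}=v_1$; it is Hamiltonian if it has length $n$. *)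

(* Defs.v *)
From mathcomp Require Import all_boot.
Set Implicit Arguments. Unset Strict Implicit. Unset Printing Implicit Defensive.

Section Hyper.
Variable V : finType.
Definition hypergraph := {set {set V}}.

Definition is_3graph (E : hypergraph) : Prop := forall e, e \in E -> #|e| <= 3.

Definition adj (E : hypergraph) (u v : V) : bool :=
  (u != v) && [exists e in E, (u \in e) && (v \in e)].

(* degree in the shadow: number of vertices adjacent to u *)
Definition deg (E : hypergraph) (u : V) : nat := #|[set v | adj E u v]|.

Definition berge_path (E : hypergraph) (t : nat) (vs : seq V) (es : seq {set V}) : Prop :=
  [/\ size es = t, size vs = t.+1, uniq es & uniq vs] /\
  [/\ all (fun e => e \in E) es &
      forall i, i < t -> forall x0 e0,
        (nth x0 vs i \in nth e0 es i) /\ (nth x0 vs i.+1 \in nth e0 es i)].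

Definition hamiltonian_berge_path (E : hypergraph) : Prop :=
  exists t vs es, berge_path E t vs es /\ (forall v, v \in vs).

Definition berge_cycle (E : hypergraph) (t : nat) (vs : seq V) (es : seq {set V}) : Prop :=
  [/\ size es = t, size vs = t, uniq es & uniq vs] /\
  [/\ all (fun e => e \in E) es &
      forall i, i < t -> forall x0 e0,
        (nth x0 vs i \in nth e0 es i) /\ (nth x0 vs (i.+1 %% t) \in nth e0 es i)].

Definition has_berge_cycle_of_length (E : hypergraph) (t : nat) : Prop :=
  exists vs es, berge_cycle E t vs es.

Definition hamiltonian_berge_cycle (E : hypergraph) : Prop :=
  has_berge_cycle_of_length E #|V|.
End Hyper.

(* Main.v *)
Require Import Defs.
From mathcomp Require Import all_boot zify.



Ltac arithb b := lazymatch b with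
 | is_true ?c => arithb c
 | leq _ _ => idtac
 | ?c1 && ?c2 => arithb c1; arithb c2
 | ?c1 || ?c2 => arithb c1; arithb c2
 | ~~ ?c => arithb c
 | @eq_op _ ?u _ => let T := type of u in unify T nat
 | true => idtac | false => idtac end.

Ltac nlia := repeat match goal with
  | H : is_true ?b |- _ => tryif arithb b then fail else clear H
  | H : @eq ?T _ _ |- _ => tryif (first [unify T nat | unify T bool]) then fail else clear H
  end; lia.

Lemma two_seg (V:finType) (E : {set {set V}}) (m : nat) (x : nat -> V) (e : nat -> {set V})
 (xinj : forall a b, a <= m -> b <= m -> x a = x b -> a = b)
 (einj : forall a b, a < m -> b < m -> e a = e b -> a = b)
 (eE : forall k, k < m -> e k \in E)
 (xe1 : forall k, k < m -> x k \in e k) (xe2 : forall k, k < m -> x k.+1 \in e k)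
 p q s r g f :
 p <= q -> q < s -> s <= r -> r <= m ->
 g \in E -> f \in E -> x q \in g -> x r \in g -> x s \in f -> x p \in f -> g != f ->
 (forall k, k < m -> (p <= k < q) || (s <= k < r) -> (e k != g) && (e k != f)) ->
 forall L, L = (q - p).+1 + (r - s).+1 -> has_berge_cycle_of_length E L.
Proof.
move=> pq qs sr rm gE fE xqg xrg xsf xpf gf used L ->.
set L1 := (q - p).+1; set t := L1 + (r - s).+1.
pose X k := if k < L1 then x (p + k) else x (r - (k - L1)).
pose F k := if k < q - p then e (p + k) else if k == q - p then g
            else if k < t.-1 then e (r.-1 - (k - L1)) else f.
have FE : forall k, k < t -> F k \in E.
  move=> k kt; rewrite /F; case: ifP => h1; first (apply: eE; nlia).
  case: ifP => h2 //; case: ifP => h3 //; apply: eE; nlia.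
exists (mkseq X t), (mkseq F t); split; [split | split].
- by rewrite size_mkseq.
- by rewrite size_mkseq.
- have nu : forall k, k < m -> (p <= k < q) || (s <= k < r) -> e k <> g /\ e k <> f.
    by move=> k km hk; case/andP: (used k km hk) => /eqP ? /eqP ?.
  have FP : forall k, k < t -> (k < q - p /\ F k = e (p + k)) \/
       (q - p < k < t.-1 /\ F k = e (r.-1 - (k - L1)))
       \/ (k = q - p /\ F k = g) \/ (k = t.-1 /\ F k = f).
    move=> k kt; rewrite /F.
    case: ifP => h1; first by left.
    case: ifP => h2; first by right; right; left; split => //; apply/eqP.
    case: ifP => h3; first by right; left; split => //; nlia.
    by right; right; right; split => //; nlia.
  rewrite /mkseq map_inj_in_uniq ?iota_uniq // => a b; rewrite !mem_iota /= => ha hb.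
  have ha' : a < t by nlia. have hb' : b < t by nlia.
  have Fa := FP a ha'; have Fb := FP b hb'.
  clear X FE used xinj xe1 xe2 eE xqg xrg xsf xpf gE fE FP ha hb.
  case: Fa => [[A1 ->]|[[A1 ->]|[[A1 ->]|[A1 ->]]]];
  case: Fb => [[B1 ->]|[[B1 ->]|[[B1 ->]|[B1 ->]]]]; move=> EE;
  first [ (by rewrite EE eqxx in gf) | (by rewrite -EE eqxx in gf) | (by subst a b)
        | (match type of EE with e ?j1 = e ?j2 => have := einj j1 j2 ltac:(nlia) ltac:(nlia) EE; nlia end)
        | (exfalso; match goal with
             | H : e ?j = _ |- _ => case: (nu j ltac:(nlia) ltac:(apply/orP; first [left; nlia | right; nlia]))
             | H : _ = e ?j |- _ => case: (nu j ltac:(nlia) ltac:(apply/orP; first [left; nlia | right; nlia]))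
             end; move=> ? ?; congruence) ].
- rewrite /mkseq map_inj_in_uniq ?iota_uniq // => a b; rewrite !mem_iota /= => ha hb.
  rewrite /X; case: ifP => ?; case: ifP => ? EE;
  match type of EE with x ?j1 = x ?j2 => have := xinj j1 j2 ltac:(nlia) ltac:(nlia) EE; nlia end.
- apply/allP => y /mapP [k]; rewrite mem_iota => /andP [_ kt] ->; apply: FE; nlia.
- have XA : forall k, k < L1 -> X k = x (p + k) by move=> k hk; rewrite /X hk.
  have XB : forall k, L1 <= k -> X k = x (r - (k - L1)).
    by move=> k hk; rewrite /X ifF //; apply/negbTE; rewrite -leqNgt.
  have FA : forall k, k < q - p -> F k = e (p + k) by move=> k hk; rewrite /F hk.
  have FB : F (q - p) = g by rewrite /F ltnn eqxx.
  have FC : forall k, q - p < k < t.-1 -> F k = e (r.-1 - (k - L1)).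
    move=> k /andP [h1 h2]; rewrite /F ifF; last by apply/negbTE; rewrite -leqNgt ltnW.
    by rewrite ifF ?h2 //; apply/negbTE; rewrite neq_ltn h1 orbT.
  have FD : F t.-1 = f.
    rewrite /F ifF; last by apply/negbTE; rewrite -leqNgt; nlia.
    rewrite ifF; last by apply/negbTE; rewrite neq_ltn; apply/orP; right; nlia.
    by rewrite ltnn.
  move=> i it x0 e0; rewrite !nth_mkseq //; last first.
    case: (ltnP i.+1 t) => h; first by rewrite modn_small.
    have -> : i.+1 = t by nlia.
    by rewrite modnn; nlia.
  case: (ltnP i.+1 t) => h.
  + rewrite modn_small //.
    case: (ltngtP i (q - p)) => h1.
    * rewrite (XA i) ?(XA i.+1) ?(FA i); try nlia.
      split; [apply: xe1; nlia | rewrite addnS; apply: xe2; nlia].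
    * have hc : q - p < i < t.-1 by apply/andP; split; nlia.
      rewrite (XB i) ?(XB i.+1) ?(FC i hc); try nlia.
      have -> : r - (i - L1) = (r.-1 - (i - L1)).+1 by nlia.
      have -> : r - (i.+1 - L1) = r.-1 - (i - L1) by nlia.
      split; [apply: xe2; nlia | apply: xe1; nlia].
    * rewrite h1 FB (XA (q - p)) ?(XB (q - p).+1); try nlia.
      have -> : p + (q - p) = q by nlia.
      by have -> : r - ((q - p).+1 - L1) = r by nlia.
  + have ei : i = t.-1 by nlia.
    have -> : i.+1 %% t = 0 by rewrite ei prednK ?modnn //; nlia.
    rewrite ei FD (XA 0) ?(XB t.-1); try nlia.
    have -> : r - (t.-1 - L1) = s by nlia.
    by rewrite addn0.
Qed.

Lemma four_le (V:finType) (h : {set V}) a b c d : a \in h -> b \in h -> c \in h -> d \in h ->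
  a != b -> a != c -> a != d -> b != c -> b != d -> c != d -> 3 < #|h|.
Proof.
move=> ha hb hc hd ab ac ad bc bd cd.
have U : uniq [:: a; b; c; d].
  by rewrite /= !inE !negb_or ab ac ad bc bd cd.
have S : {subset [:: a; b; c; d] <= h}.
  by move=> y; rewrite !inE; case/or4P => /eqP ->.
have : [:: a; b; c; d] \subset h by apply/subsetP.
by move/subset_leq_card; rewrite (card_uniqP U).
Qed.

Lemma adjC (V:finType) (E : {set {set V}}) u v : adj E u v = adj E v u.
Proof.
rewrite /adj eq_sym; congr (_ && _); apply/existsP/existsP => [] [h /andP [hE /andP [a b]]];
by exists h; rewrite hE a b.
Qed.

Theorem claim2p1 (V : finType) (E : {set {set V}}) (d0 n : nat) :
  2 <= d0 -> 6 <= n -> #|V| = n ->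
  is_3graph E ->
  (forall u v : V, u != v -> ~~ adj E u v -> n + d0 <= deg E u + deg E v) ->
  hamiltonian_berge_path E ->
  ~ hamiltonian_berge_cycle E ->
  has_berge_cycle_of_length E (n - 1) \/ has_berge_cycle_of_length E (n - 2).
Proof.
move=> d02 n6 Vn H3 Hdeg [t [vs [es [[[Ses Svs Ues Uvs] [Aes Hp]] Hall]]]] noHam.
have cardV : #|V| = t.+1.
  rewrite -Svs -(card_uniqP Uvs); symmetry; apply: eq_card => v; by rewrite Hall.
have En : n = t.+1 by rewrite -Vn.
move: n6 Hdeg; rewrite {}En => n6 Hdeg; clear Vn.
have [v0 _] : exists v0 : V, v0 \in vs.
  by case: vs Svs {Uvs Hall Hp} => [//|v0 ?] _; exists v0; rewrite inE eqxx.
pose x k := nth v0 vs k.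
pose e k := nth set0 es k.
have xinj : forall a b, a <= t -> b <= t -> x a = x b -> a = b.
  by move=> a b ha hb /eqP; rewrite nth_uniq ?Svs // => /eqP.
have einj : forall a b, a < t -> b < t -> e a = e b -> a = b.
  by move=> a b ha hb /eqP; rewrite nth_uniq ?Ses // => /eqP.
have eE : forall k, k < t -> e k \in E.
  by move=> k hk; apply: (allP Aes); apply: mem_nth; rewrite Ses.
have xe1 : forall k, k < t -> x k \in e k by move=> k hk; case: (Hp k hk v0 set0).
have xe2 : forall k, k < t -> x k.+1 \in e k by move=> k hk; case: (Hp k hk v0 set0).
have eidx : forall h, h \in es -> index h es < t /\ e (index h es) = h.
  by move=> h hes; rewrite -Ses index_mem /e nth_index.
have emem : forall k, k < t -> e k \in es by move=> k hk; apply: mem_nth; rewrite Ses.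
have xidx : forall v, x (index v vs) = v by move=> v; rewrite /x nth_index.
clearbody x e.
have xneq : forall a b, a <= t -> b <= t -> a != b -> x a != x b.
  by move=> a b ha hb; apply: contra => /eqP /xinj -> //.
have hit : forall h j a b, h \in E -> j < t -> e j = h -> x a \in h -> x b \in h ->
    a <= t -> b <= t -> a != b -> [|| j == a, j == b, j.+1 == a | j.+1 == b].
  move=> h j a b hE jt ejh xa xb ha hb ab.
  case: (boolP [|| j == a, j == b, j.+1 == a | j.+1 == b]) => // hn; exfalso.
  rewrite !negb_or in hn; case/and4P: hn => h1 h2 h3 h4.
  have xj : x j \in h by rewrite -ejh xe1.
  have xj1 : x j.+1 \in h by rewrite -ejh xe2.
  have jt' : j <= t by nlia.
  have d2 : a != j by nlia.
  have d3 : a != j.+1 by nlia.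
  have d4 : b != j by nlia.
  have d5 : b != j.+1 by nlia.
  have d6 : j != j.+1 by nlia.
  have := @four_le _ h _ _ _ _ xa xb xj xj1 (xneq _ _ ha hb ab)
    (xneq _ _ ha jt' d2) (xneq _ _ ha jt d3) (xneq _ _ hb jt' d4) (xneq _ _ hb jt d5)
    (xneq _ _ jt' jt d6).
  by have := H3 h hE; nlia.
have finish : forall L, has_berge_cycle_of_length E L -> t.-1 <= L <= t.+1 ->
    has_berge_cycle_of_length E (t.+1 - 1) \/ has_berge_cycle_of_length E (t.+1 - 2).
  move=> L HL hL.
  have [EL|[EL|EL]] : L = t.+1 \/ L = t \/ L = t.-1 by nlia.
  - by exfalso; apply: noHam; rewrite /hamiltonian_berge_cycle cardV -EL.
  - by left; have -> : t.+1 - 1 = L by nlia.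
  - by right; have -> : t.+1 - 2 = L by nlia.
have t5 : 5 <= t by nlia.
have x0t : x 0 != x t by apply: xneq; nlia.
have seg := @two_seg V E t x e xinj einj eE xe1 xe2.
case: (boolP (adj E (x 0) (x t))) => [Hadj | Hnadj].
  case/andP: Hadj => _ /existsP [h /andP [hE /andP [h0 ht]]].
  case: (boolP (h \in es)) => hes.
  - have [jt ejh] := eidx h hes.
    have := hit h (index h es) 0 t hE jt ejh h0 ht ltac:(nlia) ltac:(nlia) ltac:(nlia).
    move: (index h es) jt ejh => j jt ejh Hj.
    have [j0|j1] : j = 0 \/ j = t.-1 by nlia.
    + apply: (finish t) ; last nlia.
      apply: (seg 1 t.-1 t t (e t.-1) (e 0)); try nlia.
      * by apply: eE; nlia.
      * by apply: eE; nlia.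
      * by apply: xe1; nlia.
      * by have := xe2 t.-1 ltac:(nlia); rewrite prednK //; nlia.
      * by rewrite -j0 ejh.
      * by apply: xe2; nlia.
      * by apply/eqP => /einj; nlia.
      * move=> k kt hk; apply/andP; split; apply/eqP => /einj; nlia.
    + apply: (finish t) ; last nlia.
      apply: (seg 0 t.-2 t.-1 t.-1 (e t.-2) (e t.-1)); try nlia.
      * by apply: eE; nlia.
      * by apply: eE; nlia.
      * by apply: xe1; nlia.
      * by have := xe2 t.-2 ltac:(nlia); have -> : t.-2.+1 = t.-1 by nlia.
      * by apply: xe1; nlia.
      * by rewrite -j1 ejh.
      * by apply/eqP => /einj; nlia.
      * move=> k kt hk; apply/andP; split; apply/eqP => /einj; nlia.
  - apply: (finish t.+1) ; last nlia.
    apply: (seg 0 t.-1 t t (e t.-1) h _ _ _ _ _ hE _ _ ht h0); try nlia.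
    * by apply: eE; nlia.
    * by apply: xe1; nlia.
    * by have := xe2 t.-1 ltac:(nlia); rewrite prednK //; nlia.
    * by apply: contraNneq hes => <-; apply: emem; nlia.
    * move=> k kt hk; apply/andP; split.
        by apply/eqP => /einj; nlia.
      by apply: contraNneq hes => <-; apply: emem; nlia.
have noAdj : forall h, h \in E -> x 0 \in h -> x t \in h -> False.
  move=> h hE h0 ht; move/negP: Hnadj; apply; rewrite /adj x0t /=.
  by apply/existsP; exists h; rewrite hE h0 ht.
have idx_lt : forall v, index v vs <= t.
  by move=> v; have := Hall v; rewrite -index_mem Svs.
pose N0 := [set v | adj E (x 0) v].
pose Nm := [set v | adj E (x t) v].
pose pr v := x (index v vs).-1.
have idx_pos : forall v, v \in N0 -> 0 < index v vs.
  move=> v; rewrite inE lt0n; apply: contraTneq => h0.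
  by rewrite /adj -(xidx v) h0 eqxx.
have pr_inj : {in N0 &, injective pr}.
  move=> v w hv hw /xinj H.
  have := idx_pos v hv; have := idx_pos w hw; have := idx_lt v; have := idx_lt w.
  move=> h1 h2 h3 h4; rewrite -(xidx v) -(xidx w); congr x.
  have := H ltac:(nlia) ltac:(nlia); nlia.
have sub1 : pr @: N0 \subset [set~ x t].
  apply/subsetP => y /imsetP [v hv ->]; rewrite !inE; apply/eqP => /xinj.
  have := idx_lt v; have := idx_pos v hv; move=> h1 h2 H.
  have := H ltac:(nlia) ltac:(nlia); nlia.
have sub2 : Nm \subset [set~ x t].
  by apply/subsetP => y; rewrite !inE /adj; apply: contraTneq => ->; rewrite eqxx.
have cU : #|pr @: N0 :|: Nm| <= t.
  have : pr @: N0 :|: Nm \subset [set~ x t] by rewrite subUset sub1 sub2.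
  by move/subset_leq_card; rewrite cardsC1 cardV.
have cI : 0 < #|pr @: N0 :&: Nm|.
  have := cardsUI (pr @: N0) Nm; rewrite card_in_imset //.
  have := Hdeg (x 0) (x t) x0t Hnadj; rewrite /deg -/N0 -/Nm.
  move: cU; nlia.
move: cI; rewrite card_gt0 => /set0Pn [w]; rewrite inE => /andP [/imsetP [v hv ->] hw].
have := idx_pos v hv; have := idx_lt v.
have xv := xidx v.
move: hv hw; rewrite /pr !inE.
move: (index v vs) xv => k xk hv hw klt kpos.
have [i ki] : exists i, k = i.+1 by exists k.-1; nlia.
subst k; rewrite /= in hw.
have i1 : 1 <= i.
  case: i xk hv hw {klt kpos} => // _ _ hw.
  by move: Hnadj; rewrite adjC hw.
have it : i.+1 <= t.-1.
  have : i.+1 != t by apply: contraTneq hv => E1; rewrite -xk E1.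
  nlia.
case/andP: hv => _ /existsP [f /andP [fE /andP [f0 f1]]].
case/andP: hw => _ /existsP [g /andP [gE /andP [gt gi]]].
rewrite -xk in f1.
have Pf : exists f' p s, [/\ f' \in E, x p \in f', x s \in f', x 0 \in f' &
   [/\ p <= 1, i.+1 <= s <= i.+2, s <= t.-1, p + s <= i.+2 &
        forall k, k < t -> (p <= k < i) || (s <= k) -> e k != f']].
  case: (boolP (has (fun j => (j != i) && (e j == f)) (iota 0 t))) => Hh.
  - case/hasP: Hh => j; rewrite mem_iota => /andP [_ jt] /andP [ji /eqP ejf].
    have Hj := hit f j 0 i.+1 fE jt ejf f0 f1 ltac:(nlia) ltac:(nlia) ltac:(nlia).
    have [j0|j1] : j = 0 \/ j = i.+1 by nlia.
    + exists f, 1, i.+1; split => //.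
        by rewrite -ejf j0; apply: xe2; nlia.
      split; try nlia.
      move=> k kt hk; rewrite -ejf j0; apply/eqP => /einj; nlia.
    + have i2 : i.+2 <= t.-1.
        have : i.+2 != t.
          apply/eqP => E2; apply: (noAdj f fE f0); rewrite -ejf j1 -E2; apply: xe2; nlia.
        nlia.
      exists f, 0, i.+2; split => //.
        by rewrite -ejf j1; apply: xe2; nlia.
      split; try nlia.
      move=> k kt hk; rewrite -ejf j1; apply/eqP => /einj; nlia.
  - exists f, 0, i.+1; split => //; split; try nlia.
    move=> k kt hk; move/hasPn: Hh => /(_ k); rewrite mem_iota /= => /(_ kt).
    by rewrite negb_and negbK => /orP [/eqP ki|//]; nlia.
have Pg : exists g' q r, [/\ g' \in E, x q \in g', x r \in g', x t \in g' &
   [/\ 1 <= q <= i, t.-1 <= r <= t, i - q + (t - r) <= 1 &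
        forall k, k < t -> (k < q) || (i.+1 <= k < r) -> e k != g']].
  case: (boolP (has (fun j => (j != i) && (e j == g)) (iota 0 t))) => Hh.
  - case/hasP: Hh => j; rewrite mem_iota => /andP [_ jt] /andP [ji /eqP ejg].
    have Hj := hit g j t i gE jt ejg gt gi ltac:(nlia) ltac:(nlia) ltac:(nlia).
    have [j0|j1] : j = t.-1 \/ j.+1 = i by nlia.
    + exists g, i, t.-1; split => //.
        by rewrite -ejg j0; apply: xe1; nlia.
      split; try nlia.
      move=> k kt hk; rewrite -ejg j0; apply/eqP => /einj; nlia.
    + have i2 : 2 <= i.
        have : i != 1.
          apply/eqP => E2; apply: (noAdj g gE) => //; rewrite -ejg.
          have -> : 0 = j by nlia.
          apply: xe1; nlia.
        nlia.
      exists g, i.-1, t; split => //.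
        rewrite -ejg (_ : i.-1 = j); [apply: xe1; nlia | nlia].
      split; try nlia.
      move=> k kt hk; rewrite -ejg; apply/eqP => /einj; nlia.
  - exists g, i, t; split => //; split; try nlia.
    move=> k kt hk; move/hasPn: Hh => /(_ k); rewrite mem_iota /= => /(_ kt).
    by rewrite negb_and negbK => /orP [/eqP ki|//]; nlia.
case: Pf => f' [p [s [f'E xpf xsf x0f [p1 si st ps fu]]]].
case: Pg => g' [q [r [g'E xqg xrg xtg [qi rt qr gu]]]].
have gf : g' != f' by apply/eqP => E3; apply: (noAdj f' f'E x0f); rewrite -E3.
apply: (finish ((q - p).+1 + (r - s).+1)); last nlia.
apply: (seg p q s r g' f' _ _ _ _ g'E f'E xqg xrg xsf xpf gf); try nlia.
move=> k kt hk; apply/andP; split.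
  by apply: gu => //; nlia.
by apply: fu => //; nlia.
Qed.
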